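(* Consider a matched pair study and suppose the statistic $t(\cdot,\cdot)$ is effect increasing or differential increasing. If the bounded null $\overline H_0$ holds, then for every $\alpha\in(0,1)$ (with $\overline p_{\Gamma_0;k}$ computed from $q_{ij}=q_{ij}(Y)$ and $T=t(Z,Y)$): (i) for each $k$, $\{\Gamma_0\in[1,\infty]:\overline p_{\Gamma_0;k}>\alpha\}$ is a $1-\alpha$ confidence set for $\Gamma^\star_{(k)}$; (ii) for each $\Gamma_0$, $\{I-k:\overline p_{\Gamma_0;k}>\alpha,\ 0\le k\le I\}$ is a $1-\alpha$ confidence set for $I^\star(\Gamma_0)$; and (iii) these are simultaneously valid: $\mathbb P\big(\Gamma^\star\in\bigcap_{(\Gamma_0,k):\overline p_{\Gamma_0;k}\le\alpha}\mathcal S_{\Gamma_0;k}^c\big)\ge1-\alpha$.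
   Context: Setting: $I$ matched pairs; potential outcomes fixed; $Z\in\mathcal Z=\{z\in\{0,1\}^{2I}:z_{i1}+z_{i2}=1\ \forall i\}$ random with true mechanism $\mathbb P(Z=z)=\prod_i\prod_j(p^\star_{ij})^{z_{ij}}$; $\Gamma^\star_i=\max_jp^\star_{ij}/\min_kp^\star_{ik}\in[1,\infty]$, $\Gamma^\star_{(k)}$ its $k$th smallest, $I^\star(\Gamma_0)=\#\{i:\Gamma^\star_i>\Gamma_0\}$, $\mathcal S_{\Gamma_0;k}=\{\Gamma\in[1,\infty]^I:\Gamma_{(k)}\le\Gamma_0\}$ ($\Gamma_{(k)}$ = $k$th smallest coordinate), complement in $[1,\infty]^I$. $Y=Z\circ Y(1)+(1-Z)\circ Y(0)$. $\overline H_0$: $Y_{ij}(1)\le Y_{ij}(0)$ for all $i,j$. $t(z,y)=\sum_i\sum_jz_{ij}q_{ij}(y)$. Effect increasing: $t(z,y+z\circ\eta+(1-z)\circ\xi)\ge t(z,y)$ for $z\in\mathcal Z$, $\eta\succcurlyeq0\succcurlyeq\xi$. Differential increasing: $t(z,y+a\circ\eta)-t(z,y)\le t(a,y+a\circ\eta)-t(a,y)$ for $z,a\in\mathcal Z$, $\eta\succcurlyeq0$. With $q_{ij}=q_{ij}(Y)$, fix an ordering by nondecreasing $|q_{i1}-q_{i2}|$ and let $\mathcal I_k$ be the first $k$ pairs; $\overline T(\Gamma_0;k)$ is a sum of independent variables equal, for $i\in\mathcal I_k$, to $\max\{q_{i1},q_{i2}\}$ w.p. $\Gamma_0/(1+\Gamma_0)$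 and $\min\{q_{i1},q_{i2}\}$ otherwise, and for $i\notin\mathcal I_k$ to $\max\{q_{i1},q_{i2}\}$; $\overline p_{\Gamma_0;k}=\mathbb P(\overline T(\Gamma_0;k)\ge c)|_{c=T}$, and $\overline p_{\Gamma_0;0}=1$. *)

(* Defs.v *)
From HB Require Import structures.
From mathcomp Require Import all_boot all_order all_algebra.
From mathcomp Require Import boolp reals constructive_ereal.
Set Implicit Arguments. Unset Strict Implicit. Unset Printing Implicit Defensive.
Import Order.TTheory GRing.Theory Num.Theory.
Local Open Scope ring_scope.

(* Matched pairs: pair i : 'I_I, unit j : 'I_2 (j = 0 is "unit 1", j = 1 is "unit 2").
   An assignment z in the set  Z = {z in {0,1}^{2I} : z_i1 + z_i2 = 1}  is encoded
   bijectively by s : {ffun 'I_I -> 'I_2} (the treated unit of each pair);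
   its 0/1 vector is [zv s]. *)

Section Defs.
Variables (R : realType) (I : nat).
Local Notation vec := ('I_I -> 'I_2 -> R).

Definition zv (s : {ffun 'I_I -> 'I_2}) : vec := fun i j => (s i == j)%:R.

Definition Yobs (Y1 Y0 : vec) (s : {ffun 'I_I -> 'I_2}) : vec :=
  fun i j => zv s i j * Y1 i j + (1 - zv s i j) * Y0 i j.

Definition tstat (q : vec -> vec) (s : {ffun 'I_I -> 'I_2}) (y : vec) : R :=
  \sum_(i < I) \sum_(j < 2) zv s i j * q y i j.

Definition effect_increasing (q : vec -> vec) : Prop :=
  forall (s : {ffun 'I_I -> 'I_2}) (y eta xi : vec),
    (forall i j, 0 <= eta i j) -> (forall i j, xi i j <= 0) ->
    tstat q s y <=
    tstat q s (fun i j => y i j + zv s i j * eta i j + (1 - zv s i j) * xi i j).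

Definition differential_increasing (q : vec -> vec) : Prop :=
  forall (s a : {ffun 'I_I -> 'I_2}) (y eta : vec),
    (forall i j, 0 <= eta i j) ->
    let y' := fun i j => y i j + zv a i j * eta i j in
    tstat q s y' - tstat q s y <= tstat q a y' - tstat q a y.

Definition bounded_null (Y1 Y0 : vec) : Prop := forall i j, Y1 i j <= Y0 i j.

(* probability of an event under the true mechanism
   P(Z = z) = prod_i prod_j (p*_ij)^{z_ij} = prod_i p*_{i, s i} *)
Definition Prob (pstar : vec) (E : {ffun 'I_I -> 'I_2} -> Prop) : R :=
  \sum_(s : {ffun 'I_I -> 'I_2} | `[< E s >]) \prod_(i < I) pstar i (s i).

Definition Gstar (pstar : vec) (i : 'I_I) : \bar R :=
  let pmax := Num.max (pstar i ord0) (pstar i ord_max) in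
  let pmin := Num.min (pstar i ord0) (pstar i ord_max) in
  if pmin == 0 then +oo%E else (pmax / pmin)%:E.

Definition kth_smallest (G : 'I_I -> \bar R) (k : nat) : \bar R :=
  nth +oo%E (sort (fun x y : \bar R => (x <= y)%O) [seq G i | i <- enum 'I_I]) k.-1.

Definition Istar (pstar : vec) (G0 : \bar R) : nat :=
  #|[set i : 'I_I | (G0 < Gstar pstar i)%E]|.

Definition inS (G : 'I_I -> \bar R) (G0 : \bar R) (k : nat) : Prop :=
  (kth_smallest G k <= G0)%E.

Definition theta (G0 : \bar R) : R :=
  match G0 with
  | EFin g => g / (1 + g)
  | +oo%E => 1
  | -oo%E => 0
  end.

(* I_k : the first k pairs in an ordering by nondecreasing |q_i1 - q_i2|
   (ties broken by the pair index; the law of Tbar does not depend on it) *)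
Definition Ik (qq : vec) (k : nat) : seq 'I_I :=
  take k (sort (fun i i' : 'I_I => `|qq i ord0 - qq i ord_max| <= `|qq i' ord0 - qq i' ord_max|)
               (enum 'I_I)).

(* pbar_{Gamma0;k} = P(Tbar(Gamma0;k) >= c)|_{c = T}, with q_ij = q_ij(Y), T = t(Z,Y),
   evaluated at the assignment s.  Tbar is the sum of independent variables
   X_i in {min_i, max_i}; b i = true means X_i = max_i. *)
Definition pbar (q : vec -> vec) (Y1 Y0 : vec) (s : {ffun 'I_I -> 'I_2})
    (G0 : \bar R) (k : nat) : R :=
  if k == 0%N then 1 else
  let y := Yobs Y1 Y0 s in
  let qq := q y in
  let T := tstat q s y in
  let S := Ik qq k in
  let th := theta G0 in
  let pi := fun (i : 'I_I) (b : bool) =>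
     if i \in S then (if b then th else 1 - th) else (if b then 1 else 0) in
  let val := fun (i : 'I_I) (b : bool) =>
     if b then Num.max (qq i ord0) (qq i ord_max) else Num.min (qq i ord0) (qq i ord_max) in
  \sum_(b : {ffun 'I_I -> bool})
     (\prod_(i < I) pi i (b i)) * (if T <= \sum_(i < I) val i (b i) then 1 else 0).

End Defs.

(* Main.v *)
Require Import Defs.
From HB Require Import structures.
From mathcomp Require Import all_boot all_order all_algebra.
From mathcomp Require Import boolp reals constructive_ereal.
From mathcomp Require Import fingroup perm ring lra.
Import Order.TTheory GRing.Theory Num.Theory.
Set Implicit Arguments. Unset Strict Implicit. Unset Printing Implicit Defensive.
Local Open Scope ring_scope.

Lemma sum_sub (R : realType) (T : finType) (P Q : pred T) (w : T -> R) :
  (forall s, 0 <= w s) -> (forall s, P s -> Q s) ->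
  \sum_(s | P s) w s <= \sum_(s | Q s) w s.
Proof.
move=> w0 PQ; rewrite [leRHS]big_mkcond [leLHS]big_mkcond /=.
apply: ler_sum => s _; case: ifP => Ps; first by rewrite PQ.
by case: ifP.
Qed.

Lemma pval_valid (R : realType) (T : finType) (w : T -> R) (Tf : T -> R) (a : R) :
  (forall s, 0 <= w s) -> 0 <= a ->
  \sum_(s | \sum_(u | Tf s <= Tf u) w u <= a) w s <= a.
Proof.
move=> w0 a0.
case: (pickP (fun s => \sum_(u | Tf s <= Tf u) w u <= a)) => [s0 Hs0|none]; last first.
  by rewrite big_pred0.
case: (@arg_minP _ _ _ s0 (fun s => \sum_(u | Tf s <= Tf u) w u <= a) Tf Hs0) => m Pm Hm.
apply: le_trans (Pm); apply: sum_sub => // s Ps; exact: Hm.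
Qed.

Lemma sum_split (R : realType) (T : finType) (P : pred T) (w : T -> R) :
  \sum_s w s = \sum_(s | P s) w s + \sum_(s | ~~ P s) w s.
Proof. exact: bigID. Qed.

Lemma zv_sum (R : realType) (I : nat) (s : {ffun 'I_I -> 'I_2}) (i : 'I_I) (x : 'I_2 -> R) :
  \sum_(j < 2) zv R s i j * x j = x (s i).
Proof.
rewrite (bigD1 (s i)) //= /zv eqxx mul1r big1 ?addr0 // => j /negbTE.
by rewrite eq_sym => ->; rewrite mul0r.
Qed.

Lemma tstatE (R : realType) (I : nat) (q : ('I_I -> 'I_2 -> R) -> 'I_I -> 'I_2 -> R) s y :
  tstat q s y = \sum_(i < I) q y i (s i).
Proof. by apply: eq_bigr => i _; rewrite zv_sum. Qed.

Lemma Tf_exists (R : realType) (I : nat) (Y1 Y0 : 'I_I -> 'I_2 -> R)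
    (q : ('I_I -> 'I_2 -> R) -> 'I_I -> 'I_2 -> R) :
  (effect_increasing q \/ differential_increasing q) -> bounded_null Y1 Y0 ->
  exists Tf : {ffun 'I_I -> 'I_2} -> R, forall s u, Tf s <= Tf u ->
    tstat q s (Yobs Y1 Y0 s) <= tstat q u (Yobs Y1 Y0 s).
Proof.
move=> [H|H] bn.
- exists (fun u => tstat q u (Yobs Y1 Y0 u)) => s u /= Hsu.
  apply: le_trans Hsu _.
  have := H u (Yobs Y1 Y0 u) (fun i j => (1 - zv R s i j) * (Y0 i j - Y1 i j))
     (fun i j => zv R s i j * (Y1 i j - Y0 i j)).
  have bn' := bn.
  rewrite (_ : (fun i j => _) = Yobs Y1 Y0 s); last first.
    apply: funext => i; apply: funext => j; rewrite /Yobs /zv.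
    by case: (s i == j); case: (u i == j) => /=; lra.
  apply; move=> i j; rewrite /zv; have := bn i j; case: (s i == j) => /=; lra.
- exists (fun u => tstat q u Y0) => s u /= Hsu.
  have := H u s (Yobs Y1 Y0 s) (fun i j => Y0 i j - Y1 i j).
  rewrite /= (_ : (fun i j => _) = Y0); last first.
    apply: funext => i; apply: funext => j; rewrite /Yobs /zv.
    by case: (s i == j) => /=; lra.
  move=> H1; have {H1} := H1 (fun i j => ltac:(have := bn i j; lra)).
  lra.
Qed.

Definition flip (I : nat) (i0 : 'I_I) (b : {ffun 'I_I -> bool}) : {ffun 'I_I -> bool} :=
  [ffun i => if i == i0 then ~~ b i else b i].

Lemma flipK I i0 : involutive (@flip I i0).
Proof.
move=> b; apply/ffunP => i; rewrite !ffunE.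
by case: (i == i0) => //; rewrite negbK.
Qed.

Lemma sum_pair (R : realType) I (i0 : 'I_I) (F : {ffun 'I_I -> bool} -> R) :
  \sum_(b : {ffun 'I_I -> bool}) F b = \sum_(b : {ffun 'I_I -> bool} | ~~ b i0) (F b + F (flip i0 b)).
Proof.
rewrite (bigID (fun b : {ffun 'I_I -> bool} => ~~ b i0)) /= big_split /=; congr (_ + _).
rewrite (reindex (flip i0)); last by apply: onW_bij; apply: inv_bij; apply: flipK.
by apply: eq_bigl => b; rewrite ffunE eqxx negbK.
Qed.

Definition Ex (R : realType) I (pi : 'I_I -> bool -> R) (g : {ffun 'I_I -> bool} -> R) :=
  \sum_(b : {ffun 'I_I -> bool}) (\prod_i pi i (b i)) * g b.

Lemma one_coord (R : realType) I (i0 : 'I_I) (r r' : 'I_I -> bool -> R) (g : {ffun 'I_I -> bool} -> R) :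
  (forall i b, 0 <= r i b) ->
  (forall i, i != i0 -> r i =1 r' i) ->
  r i0 true + r i0 false = r' i0 true + r' i0 false ->
  r i0 true <= r' i0 true ->
  (forall b : {ffun 'I_I -> bool}, ~~ b i0 -> g b <= g (flip i0 b)) ->
  Ex r g <= Ex r' g.
Proof.
move=> r0 rr' rs rt gm; rewrite /Ex (sum_pair i0) [leRHS](sum_pair i0).
apply: ler_sum => b nb.
rewrite [\prod_i r i (b i)](bigD1 i0) // [\prod_i r i (flip i0 b i)](bigD1 i0) //.
rewrite [\prod_i r' i (b i)](bigD1 i0) // [\prod_i r' i (flip i0 b i)](bigD1 i0) //=.
rewrite !ffunE eqxx (negbTE nb) /=.
set C := \prod_(i | i != i0) r i (b i).
have -> : \prod_(i | i != i0) r i ((flip i0 b) i) = C.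
  by apply: eq_bigr => i /negbTE ni; rewrite ffunE ni.
have -> : \prod_(i | i != i0) r' i ((flip i0 b) i) = C.
  by apply: eq_bigr => i /negbTE ni; rewrite ffunE ni -rr' // ni.
have -> : \prod_(i | i != i0) r' i (b i) = C.
  by apply: eq_bigr => i ni; rewrite -rr'.
have C0 : 0 <= C by apply: prodr_ge0 => i _.
have := gm b nb; set gb := g b; set gu := g (flip i0 b) => hg.
have key : r i0 false * gb + r i0 true * gu <= r' i0 false * gb + r' i0 true * gu.
  have e : r' i0 false = r i0 true + r i0 false - r' i0 true by rewrite rs; ring.
  rewrite e -subr_ge0.
  have -> : (r i0 true + r i0 false - r' i0 true) * gb + r' i0 true * gu -
    (r i0 false * gb + r i0 true * gu) = (r' i0 true - r i0 true) * (gu - gb) by ring.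
  by apply: mulr_ge0; rewrite subr_ge0.
have := ler_wpM2r C0 key.
have -> : (r i0 false * gb + r i0 true * gu) * C = r i0 false * C * gb + r i0 true * C * gu by ring.
have -> : (r' i0 false * gb + r' i0 true * gu) * C = r' i0 false * C * gb + r' i0 true * C * gu by ring.
done.
Qed.

Lemma Ex_ext (R : realType) I (p p' : 'I_I -> bool -> R) g :
  (forall i b, p i b = p' i b) -> Ex p g = Ex p' g.
Proof.
move=> e; apply: eq_bigr => b _; congr (_ * _); apply: eq_bigr => i _; exact: e.
Qed.

Lemma mono_all (R : realType) I (p p' : 'I_I -> bool -> R) (g : {ffun 'I_I -> bool} -> R) :
  (forall i b, 0 <= p i b) -> (forall i b, 0 <= p' i b) ->
  (forall i, p i true + p i false = p' i true + p' i false) ->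
  (forall i, p i true <= p' i true) ->
  (forall (b : {ffun 'I_I -> bool}) i0, ~~ b i0 -> g b <= g (flip i0 b)) ->
  Ex p g <= Ex p' g.
Proof.
move=> p0 p'0 ps pt gm.
pose mix n := fun i : 'I_I => if (i < n)%N then p' i else p i.
have H : forall n, Ex p g <= Ex (mix n) g.
  elim=> [|n IH].
    by rewrite (@Ex_ext _ _ p (mix 0%N)).
  apply: le_trans IH _.
  case: (ltnP n I) => nI.
    pose i0 := Ordinal nI.
    apply: (@one_coord _ _ i0).
    - by move=> i b; rewrite /mix; case: ifP.
    - move=> i ni b; rewrite /mix ltnS [(i <= n)%N]leq_eqVlt.
      suff -> : (i == n :> nat) = false by [].
      by apply/negbTE; apply: contra ni => /eqP e; apply/eqP/val_inj.
    - by rewrite /mix /= ltnn ltnSn.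
    - by rewrite /mix /= ltnn ltnSn.
    - by move=> b; apply: gm.
  rewrite (@Ex_ext _ _ (mix n) (mix n.+1)) // => i b.
  rewrite /mix (leq_trans (ltn_ord i) nI) (leq_trans (ltn_ord i) (leqW nI)) //.
apply: le_trans (H I) _; rewrite (@Ex_ext _ _ (mix I) p') // => i b.
by rewrite /mix ltn_ord.
Qed.

Definition piS (R : realType) I (S : {set 'I_I}) (th : R) (i : 'I_I) (b : bool) : R :=
  if i \in S then (if b then th else 1 - th) else (if b then 1 else 0).

Definition gth (R : realType) I (c : R) (M m : 'I_I -> R) (b : {ffun 'I_I -> bool}) : R :=
  if c <= \sum_i (if b i then M i else m i) then 1 else 0.

Lemma gth_mono (R : realType) I (c : R) (M m : 'I_I -> R) (b b' : {ffun 'I_I -> bool}) :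
  \sum_i (if b i then M i else m i) <= \sum_i (if b' i then M i else m i) ->
  gth c M m b <= gth c M m b'.
Proof.
rewrite /gth => h; case: ifP => h1; last by case: ifP.
by rewrite (le_trans h1 h).
Qed.

Lemma piS_ge0 (R : realType) I S (th : R) i b : 0 <= th <= 1 -> 0 <= @piS R I S th i b.
Proof.
move=> /andP[t0 t1]; rewrite /piS; case: (i \in S); case: b => //; by rewrite subr_ge0.
Qed.

Lemma swap_lemma (R : realType) I (S : {set 'I_I}) (th c : R) (M m : 'I_I -> R) (i j : 'I_I) :
  0 <= th <= 1 -> i \notin S -> j \in S -> M i - m i <= M j - m j ->
  Ex (piS S th) (gth c M m) <= Ex (piS (i |: (S :\ j)) th) (gth c M m).
Proof.
move=> th01 iS jS dij.
have ij : i != j by apply: contra iS => /eqP ->.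
set t := tperm i j.
pose h := fun b : {ffun 'I_I -> bool} => [ffun l => b (t l)].
have hK : involutive h.
  by move=> b; apply/ffunP => l; rewrite !ffunE tpermK.
rewrite /Ex (reindex h); last by apply: onW_bij; apply: inv_bij.
apply: ler_sum => b _.
have -> : \prod_l piS S th l (h b l) = \prod_l piS (i |: (S :\ j)) th l (b l).
  rewrite (reindex_inj (@perm_inj _ t)) /=; apply: eq_bigr => l _.
  rewrite /h ffunE tpermK /piS.
  suff -> : (t l \in S) = (l \in i |: (S :\ j)) by [].
  rewrite !inE; case: (tpermP i j l) => [->|->|li lj].
  - by rewrite eqxx jS.
  - by rewrite (negbTE iS) eq_sym (negbTE ij) eqxx.
  - have /negbTE -> : l != i by apply/eqP.
    by have /negbTE -> : l != j by apply/eqP.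
case bj : (b j).
  apply: ler_wpM2l; first by apply: prodr_ge0 => l _; apply: piS_ge0.
  apply: gth_mono.
  have ji : j != i by rewrite eq_sym.
  rewrite [in leLHS](bigD1 i) // [in leRHS](bigD1 i) //.
  rewrite [in leLHS](bigD1 j) // [in leRHS](bigD1 j) //=.
  rewrite !ffunE tpermL tpermR bj.
  have -> : \sum_(l | (l != i) && (l != j)) (if h b l then M l else m l) =
            \sum_(l | (l != i) && (l != j)) (if b l then M l else m l).
    by apply: eq_bigr => l /andP[li lj]; rewrite ffunE tpermD // eq_sym.
  rewrite !addrA lerD2r; case: (b i) => //; lra.
rewrite (bigD1 j) //= bj /piS !inE eqxx /=.
by rewrite eq_sym (negbTE ij) /= !mul0r.
Qed.

Lemma ex_ij I (S K : {set 'I_I}) : ~~ (K \subset S) -> (#|K| <= #|S|)%N ->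
  exists i j, [/\ i \in K, i \notin S, j \in S & j \notin K].
Proof.
move=> /subsetPn [i iK iS] hc.
have /subsetPn [j jS jK] : ~~ (S \subset K).
  apply/negP => SK; move: (eqEcard S K); rewrite SK hc /= => /eqP e.
  by move: iS; rewrite e iK.
by exists i, j.
Qed.

Lemma piS_sum (R : realType) I S (th : R) i : @piS R I S th i true + piS S th i false = 1.
Proof. by rewrite /piS; case: (i \in S) => /=; [rewrite addrC subrK|rewrite addr0]. Qed.

Lemma to_K (R : realType) I (S K : {set 'I_I}) (th c : R) (M m : 'I_I -> R) :
  0 <= th <= 1 -> (forall i, m i <= M i) -> (#|K| <= #|S|)%N ->
  (forall i j, i \in K -> j \notin K -> M i - m i <= M j - m j) ->
  Ex (piS S th) (gth c M m) <= Ex (piS K th) (gth c M m).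
Proof.
move=> th01 mM hc dK.
suff H : forall n S, (#|S :\: K| <= n)%N -> (#|K| <= #|S|)%N ->
  Ex (piS S th) (gth c M m) <= Ex (piS K th) (gth c M m) by exact: (H _ S (leqnn _) hc).
elim=> [|n IH] {}S hn {}hc; (case: (boolP (K \subset S)) => KS; [|
  have [i [j [iK iS jS jK]]] := ex_ij KS hc]).
- apply: mono_all.
  + by move=> *; apply: piS_ge0.
  + by move=> *; apply: piS_ge0.
  + by move=> i; rewrite !piS_sum.
  + move=> i; rewrite /piS; case/andP: th01 => t0 t1.
    case iK: (i \in K); first by rewrite (subsetP KS).
    by case: (i \in S).
  + move=> b i0 nb; apply: gth_mono; apply: ler_sum => l _.
    rewrite ffunE; case: eqP => [->|_]; last by case: (b l).
    by rewrite (negbTE nb).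
- exfalso; move: hn; rewrite leqn0 cards_eq0 => /eqP e.
  have : j \in S :\: K by rewrite inE jK.
  by rewrite e inE.
- apply: mono_all.
  + by move=> *; apply: piS_ge0.
  + by move=> *; apply: piS_ge0.
  + by move=> i; rewrite !piS_sum.
  + move=> i; rewrite /piS; case/andP: th01 => t0 t1.
    case iK: (i \in K); first by rewrite (subsetP KS).
    by case: (i \in S).
  + move=> b i0 nb; apply: gth_mono; apply: ler_sum => l _.
    rewrite ffunE; case: eqP => [->|_]; last by case: (b l).
    by rewrite (negbTE nb).
- apply: le_trans (@swap_lemma _ _ S th c M m i j th01 iS jS (dK _ _ iK jK)) _.
  apply: IH.
    have : (i |: (S :\ j)) :\: K \proper S :\: K.
      apply/properP; split.
        apply/subsetP => x; rewrite !inE => /andP[xK /orP[/eqP xi|/andP[_ ->]]].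
          by move: xK; rewrite xi iK.
        by rewrite xK.
      exists j; first by rewrite !inE jK.
      rewrite !inE eqxx /=.
      rewrite orbF; apply/negP => /andP[_ /eqP ji]; move: iS; by rewrite -ji jS.
    by move/proper_card => h; rewrite -ltnS (leq_trans h).
  rewrite cardsU1 !inE negb_and iS orbT /= (cardsD1 j S) jS /= in hc *.
  by rewrite add1n.
Qed.

Lemma card_count (T : finType) (P : pred T) : #|[set i | P i]| = count P (enum T).
Proof. rewrite cardsE cardE /enum_mem size_filter (@eq_filter _ _ predT) ?filter_predT //. Qed.

Lemma kth_count (R : realType) I (G : 'I_I -> \bar R) (k : nat) (G0 : \bar R) :
  (0 < k <= I)%N -> (kth_smallest G k <= G0)%E ->
  (k <= #|[set i | (G i <= G0)%E]|)%N.
Proof.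
move=> /andP[k0 kI]; rewrite /kth_smallest card_count.
set s := sort _ _.
have ss : sorted <=%O s by apply: sort_sorted; exact: le_total.
have sz : size s = I by rewrite size_sort size_map size_enum_ord.
have -> : count (fun i => (G i <= G0)%E) (enum 'I_I) = count (fun x => (x <= G0)%E) s.
  rewrite -(count_map G (fun x => (x <= G0)%E)).
  by apply/esym/seq.permP; rewrite perm_sort.
move=> hk.
rewrite -(cat_take_drop k s) count_cat.
apply: leq_trans (leq_addr _ _).
have st : size (take k s) = k by rewrite size_take sz; case: ltngtP kI.
have : all (fun x => (x <= G0)%E) (take k s).
  apply/(all_nthP +oo%E) => a; rewrite st => ak.
  rewrite nth_take //; apply: le_trans hk.
  apply: le_sorted_leq_nth => //; rewrite ?inE /= ?sz.
  - exact: leq_trans ak kI.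
  - by rewrite prednK // (leq_trans _ kI) // leq_pred.
  - by rewrite -ltnS prednK.
by rewrite all_count st => /eqP ->.
Qed.

Lemma kth_mem (R : realType) I (G : 'I_I -> \bar R) (k : nat) :
  (0 < k <= I)%N -> exists i, kth_smallest G k = G i.
Proof.
move=> /andP[k0 kI]; rewrite /kth_smallest.
set s := sort _ _.
have sz : size s = I by rewrite size_sort size_map size_enum_ord.
have : nth +oo%E s k.-1 \in s by rewrite mem_nth // sz (leq_trans _ kI) // prednK.
by rewrite mem_sort => /mapP [i _ ->]; exists i.
Qed.

Lemma I2_cases (j : 'I_2) : j = ord0 \/ j = ord_max.
Proof. by case: j => [[|[|n]] h] //=; [left|right]; apply: val_inj. Qed.

Lemma Gstar_ge1 (R : realType) I (pstar : 'I_I -> 'I_2 -> R) i :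
  (forall i j, 0 <= pstar i j) -> (1 <= Gstar pstar i)%E.
Proof.
move=> p0; rewrite /Gstar; case: eqP => [_|h]; first exact: leey.
rewrite lee_fin; have a0 := p0 i ord0; have b0 := p0 i ord_max.
move: h; rewrite maxEle minEle; case: ifP => hab h.
  have a0' : 0 < pstar i ord0 by rewrite lt_def a0 andbT; apply/eqP.
  by rewrite ler_pdivlMr // mul1r.
have a0' : 0 < pstar i ord_max by rewrite lt_def b0 andbT; apply/eqP.
rewrite ler_pdivlMr // mul1r; move/negbT: hab; rewrite -ltNge => /ltW //.
Qed.

Lemma theta01 (R : realType) (G0 : \bar R) : (1 <= G0)%E -> 0 <= theta G0 <= 1.
Proof.
case: G0 => [g| |] //=; rewrite ?lee_fin => g1; last by rewrite ler01 lexx.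
have g0 : 0 < 1 + g by lra.
by rewrite divr_ge0 ?(ltW g0) ?ler_pdivrMr //=; lra.
Qed.

Lemma p_le_theta (R : realType) I (pstar : 'I_I -> 'I_2 -> R) i (G0 : \bar R) j :
  (forall i j, 0 <= pstar i j) -> pstar i ord0 + pstar i ord_max = 1 ->
  (Gstar pstar i <= G0)%E -> pstar i j <= theta G0.
Proof.
move=> p0 ps; have a0 := p0 i ord0; have b0 := p0 i ord_max.
have pj : pstar i j = pstar i ord0 \/ pstar i j = pstar i ord_max.
  by case: (I2_cases j) => ->; [left|right].
rewrite /Gstar; case: G0 => [g| |] /=; last 2 first.
- by move=> _; case: pj => ->; lra.
- by case: eqP.
case: eqP => // h; rewrite lee_fin.
have g0 : forall x y : R, 0 < x -> 0 <= y -> y / x <= g -> y <= g * x /\ 0 <= g.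
  move=> x y x0 y0; rewrite ler_pdivrMr // => hy; split=> //.
  by rewrite -(pmulr_lge0 _ x0) (le_trans y0).
move: h; rewrite maxEle minEle; case: ifP => hab h hg.
  have a0' : 0 < pstar i ord0 by rewrite lt_def a0 andbT; apply/eqP.
  have [h1 h2] := g0 _ _ a0' b0 hg.
  have g1 : 0 < 1 + g by lra.
  rewrite ler_pdivlMr //.
  have : pstar i j <= pstar i ord_max by case: pj => ->; lra.
  move=> hj; apply: le_trans (_ : pstar i ord_max * (1 + g) <= g).
    by apply: ler_wpM2r => //; lra.
  have e : pstar i ord0 = 1 - pstar i ord_max by lra.
  rewrite e in h1; nra.
have b0' : 0 < pstar i ord_max by rewrite lt_def b0 andbT; apply/eqP.
have [h1 h2] := g0 _ _ b0' a0 hg.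
have g1 : 0 < 1 + g by lra.
rewrite ler_pdivlMr //.
have hab' : pstar i ord_max <= pstar i ord0 by move/negbT: hab; rewrite -ltNge => /ltW.
have : pstar i j <= pstar i ord0 by case: pj => ->; lra.
move=> hj; apply: le_trans (_ : pstar i ord0 * (1 + g) <= g).
  by apply: ler_wpM2r => //; lra.
have e : pstar i ord_max = 1 - pstar i ord0 by lra.
rewrite e in h1; nra.
Qed.

Lemma Ik_props (R : realType) I (qq : 'I_I -> 'I_2 -> R) (k : nat) : (k <= I)%N ->
  #|[set i | i \in Ik qq k]| = k /\
  forall i j, i \in Ik qq k -> j \notin Ik qq k ->
    `|qq i ord0 - qq i ord_max| <= `|qq j ord0 - qq j ord_max|.
Proof.
move=> kI; rewrite /Ik.
set d := fun i : 'I_I => `|qq i ord0 - qq i ord_max|.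
set le := fun i i' : 'I_I => d i <= d i'.
set s := sort le (enum 'I_I).
have tot : total le by move=> x y; exact: le_total.
have tr : transitive le by move=> x y z; exact: le_trans.
have ss : sorted le s by apply: sort_sorted.
have sz : size s = I by rewrite size_sort size_enum_ord.
have us : uniq s by rewrite sort_uniq enum_uniq.
split.
  transitivity (size (take k s)); last by rewrite size_take sz; case: ltngtP kI.
  have /card_uniqP <- : uniq (take k s) by apply: take_uniq.
  by rewrite cardsE.
move=> i j iT jT.
have js : j \in s by rewrite mem_sort mem_enum.
have jD : j \in drop k s by move: js; rewrite -{1}(cat_take_drop k s) mem_cat (negbTE jT).
have st : size (take k s) = k by rewrite size_take sz; case: ltngtP kI.
have ia : (index i (take k s) < k)%N by rewrite -{2}st index_mem.
have jb : (index j (drop k s) < size (drop k s))%N by rewrite index_mem.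
have -> : i = nth i s (index i (take k s)).
  by rewrite -(nth_take _ ia) nth_index.
have -> : j = nth i s (k + index j (drop k s)).
  by rewrite -nth_drop nth_index.
apply: (sorted_leq_nth tr _ i ss).
- by move=> x; exact: lexx.
- by rewrite inE sz (leq_trans ia kI).
- by rewrite inE /= -[X in (_ < size X)%N](cat_take_drop k s) size_cat st ltn_add2l.
- exact: leq_trans (ltnW ia) (leq_addr _ _).
Qed.

Definition js (R : realType) I (qq : 'I_I -> 'I_2 -> R) (i : 'I_I) : 'I_2 :=
  if qq i ord0 <= qq i ord_max then ord_max else ord0.
Definition jo (R : realType) I (qq : 'I_I -> 'I_2 -> R) (i : 'I_I) : 'I_2 :=
  if qq i ord0 <= qq i ord_max then ord0 else ord_max.
Definition Mx (R : realType) I (qq : 'I_I -> 'I_2 -> R) (i : 'I_I) : R :=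
  Num.max (qq i ord0) (qq i ord_max).
Definition Mn (R : realType) I (qq : 'I_I -> 'I_2 -> R) (i : 'I_I) : R :=
  Num.min (qq i ord0) (qq i ord_max).

Lemma true_to_Ex (R : realType) I (pstar qq : 'I_I -> 'I_2 -> R) (c : R) :
  \sum_(u : {ffun 'I_I -> 'I_2} | c <= \sum_i qq i (u i)) \prod_i pstar i (u i) =
  Ex (fun i b => pstar i (if b then js qq i else jo qq i)) (gth c (Mx qq) (Mn qq)).
Proof.
pose hinv := fun b : {ffun 'I_I -> bool} => [ffun i => if b i then js qq i else jo qq i].
pose hb := fun u : {ffun 'I_I -> 'I_2} => [ffun i => u i == js qq i].
have jsjo : forall i, (jo qq i == js qq i) = false.
  by move=> i; rewrite /jo /js; case: ifP.
have c1 : cancel hb hinv.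
  move=> u; apply/ffunP => i; rewrite !ffunE; case: eqP => // /eqP ne.
  move: ne; rewrite /jo /js; case: ifP => _;
    by case: (I2_cases (u i)) => ->.
have c2 : cancel hinv hb.
  by move=> b; apply/ffunP => i; rewrite !ffunE; case: (b i); rewrite ?eqxx ?jsjo.
rewrite big_mkcond /= (reindex hinv); last by apply: onW_bij; exists hb.
apply: eq_bigr => b _.
have -> : \sum_i qq i (hinv b i) = \sum_i (if b i then Mx qq i else Mn qq i).
  apply: eq_bigr => i _; rewrite ffunE /Mx /Mn maxEle minEle /js /jo.
  by case: (b i); case: ifP.
rewrite /gth; under eq_bigr do rewrite ffunE.
by case: ifP; rewrite ?mulr1 ?mulr0.
Qed.

Lemma MnMx (R : realType) I (qq : 'I_I -> 'I_2 -> R) i : Mn qq i <= Mx qq i.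
Proof. by rewrite /Mn /Mx maxEle minEle; case: ifP => // /negbT; rewrite -ltNge => /ltW. Qed.

Lemma dMx (R : realType) I (qq : 'I_I -> 'I_2 -> R) i :
  Mx qq i - Mn qq i = `|qq i ord0 - qq i ord_max|.
Proof.
rewrite /Mn /Mx maxEle minEle; case: ifP => h.
  by rewrite distrC ger0_norm // subr_ge0.
by rewrite ger0_norm // subr_ge0; move/negbT: h; rewrite -ltNge => /ltW.
Qed.

Lemma gth_flip (R : realType) I (c : R) (M m : 'I_I -> R) :
  (forall i, m i <= M i) ->
  forall (b : {ffun 'I_I -> bool}) i0, ~~ b i0 -> gth c M m b <= gth c M m (flip i0 b).
Proof.
move=> mM b i0 nb; apply: gth_mono; apply: ler_sum => l _.
rewrite ffunE; case: eqP => [->|_]; last by case: (b l).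
by rewrite (negbTE nb).
Qed.

Lemma core (R : realType) I (pstar Y1 Y0 : 'I_I -> 'I_2 -> R)
    (q : ('I_I -> 'I_2 -> R) -> 'I_I -> 'I_2 -> R) s (G0 : \bar R) (k : nat) :
  (forall i j, 0 <= pstar i j) -> (forall i, pstar i ord0 + pstar i ord_max = 1) ->
  (1 <= G0)%E -> (0 < k <= I)%N ->
  (k <= #|[set i | (Gstar pstar i <= G0)%E]|)%N ->
  \sum_(u | tstat q s (Yobs Y1 Y0 s) <= tstat q u (Yobs Y1 Y0 s)) \prod_i pstar i (u i)
   <= pbar q Y1 Y0 s G0 k.
Proof.
move=> p0 ps G1 /andP[k0 kI] kA.
rewrite /pbar; have -> : (k == 0%N) = false by case: k k0 {kI kA}.
set y := Yobs Y1 Y0 s; set qq := q y; set T := tstat q s y.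
have -> : \sum_(u | T <= tstat q u y) \prod_i pstar i (u i) =
          \sum_(u : {ffun 'I_I -> 'I_2} | T <= \sum_i qq i (u i)) \prod_i pstar i (u i).
  by apply: eq_bigl => u; rewrite tstatE.
rewrite true_to_Ex.
set A := [set i | (Gstar pstar i <= G0)%E].
set K := [set i | i \in Ik qq k].
have th01 := theta01 G1.
have [cK dK] := Ik_props qq kI.
apply: le_trans (_ : Ex (piS A (theta G0)) (gth T (Mx qq) (Mn qq)) <= _).
  apply: mono_all.
  - by move=> *; apply: p0.
  - by move=> *; apply: piS_ge0.
  - move=> i; rewrite piS_sum /js /jo; case: ifP => _ //; by rewrite addrC.
  - move=> i; rewrite /piS inE; case: ifP => iA.
      exact: p_le_theta.
    have := p0 i ord0; have := p0 i ord_max; have := ps i.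
    by case: (I2_cases (js qq i)) => -> *; lra.
  - by apply: gth_flip => i; apply: MnMx.
apply: le_trans (_ : Ex (piS K (theta G0)) (gth T (Mx qq) (Mn qq)) <= _).
  apply: to_K => //.
  - by move=> i; apply: MnMx.
  - by rewrite cK.
  - by move=> i j iK jK; rewrite !dMx; apply: dK; move: iK jK; rewrite !inE.
rewrite le_eqVlt; apply/orP; left; apply/eqP.
apply: eq_bigr => b _; congr (_ * _).
by apply: eq_bigr => i _; rewrite /piS inE.
Qed.

Lemma Prob_mono (R : realType) I (pstar : 'I_I -> 'I_2 -> R) (P Q : {ffun 'I_I -> 'I_2} -> Prop) :
  (forall i j, 0 <= pstar i j) -> (forall s, P s -> Q s) -> Prob pstar P <= Prob pstar Q.
Proof.
move=> p0 PQ; apply: sum_sub => [s|s /asboolP Ps]; first by apply: prodr_ge0.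
by apply/asboolP; apply: PQ.
Qed.

Lemma total1 (R : realType) I (pstar : 'I_I -> 'I_2 -> R) :
  (forall i, pstar i ord0 + pstar i ord_max = 1) ->
  \sum_(s : {ffun 'I_I -> 'I_2}) \prod_i pstar i (s i) = 1.
Proof.
move=> ps; rewrite -bigA_distr_bigA /= big1 // => i _.
rewrite big_ord_recr /= big_ord_recr big_ord0 /=.
have -> : widen_ord (leqnSn 1) ord_max = ord0 :> 'I_2 by apply: val_inj.
have := ps i; lra.
Qed.

Theorem theoremA3 (R : realType) (I : nat)
    (pstar Y1 Y0 : 'I_I -> 'I_2 -> R)
    (q : ('I_I -> 'I_2 -> R) -> 'I_I -> 'I_2 -> R) (alpha : R) :
  (forall i j, 0 <= pstar i j) ->
  (forall i, pstar i ord0 + pstar i ord_max = 1) ->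
  (effect_increasing q \/ differential_increasing q) ->
  bounded_null Y1 Y0 ->
  0 < alpha < 1 ->
  (* (i) *)
  (forall k : nat, (0 < k <= I)%N ->
     1 - alpha <= Prob pstar (fun s =>
        let g := kth_smallest (Gstar pstar) k in
        (1 <= g)%E /\ alpha < pbar q Y1 Y0 s g k))
  /\
  (* (ii) *)
  (forall G0 : \bar R, (1 <= G0)%E ->
     1 - alpha <= Prob pstar (fun s =>
        exists k : 'I_I.+1, (I - k)%N = Istar pstar G0 /\ alpha < pbar q Y1 Y0 s G0 k))
  /\
  (* (iii) *)
  (1 - alpha <= Prob pstar (fun s =>
      forall (G0 : \bar R) (k : nat), (1 <= G0)%E -> (0 < k <= I)%N ->
        pbar q Y1 Y0 s G0 k <= alpha -> ~ inS (Gstar pstar) G0 k)).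
Proof.
move=> p0 ps Hq bn /andP[a0 a1].
have [Tf HT] := Tf_exists Hq bn.
pose w := fun s : {ffun 'I_I -> 'I_2} => \prod_i pstar i (s i).
have w0 : forall s, 0 <= w s by move=> s; apply: prodr_ge0.
pose F := fun s => \sum_(u | Tf s <= Tf u) w u.
have key : forall s G0 k, (1 <= G0)%E -> (0 < k <= I)%N ->
    (k <= #|[set i | (Gstar pstar i <= G0)%E]|)%N -> F s <= pbar q Y1 Y0 s G0 k.
  move=> s G0 k G1 kI kA; apply: le_trans (@core R I pstar Y1 Y0 q s G0 k p0 ps G1 kI kA).
  by apply: sum_sub => // u; apply: HT.
have good : 1 - alpha <= Prob pstar (fun s => alpha < F s).
  have := total1 ps; rewrite (bigID (fun s => F s <= alpha)) /= => e.
  have h := @pval_valid R _ w Tf alpha w0 (ltW a0).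
  rewrite /Prob.
  have -> : \sum_(s | `[< alpha < F s >]) \prod_i pstar i (s i) =
            \sum_(s | ~~ (F s <= alpha)) w s.
    by apply: eq_bigl => s; rewrite -ltNge; apply/asboolP/idP.
  rewrite -e; rewrite /F /w in h *; lra.
split; [|split].
- move=> k kI; apply: le_trans good _; apply: Prob_mono => // s Fs /=.
  split.
    by have [i ->] := kth_mem (Gstar pstar) kI; apply: Gstar_ge1.
  apply: lt_le_trans Fs (key _ _ _ _ kI _).
    by have [i ->] := kth_mem (Gstar pstar) kI; apply: Gstar_ge1.
  exact: kth_count kI (lexx _).
- move=> G0 G1; apply: le_trans good _; apply: Prob_mono => // s Fs /=.
  set A := [set i | (Gstar pstar i <= G0)%E].
  have cA : (#|A| < I.+1)%N by rewrite ltnS; apply: leq_trans (max_card _) _; rewrite card_ord.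
  have cI : (#|A| + Istar pstar G0)%N = I.
    have e1 : #|~: A| = Istar pstar G0.
      by rewrite /Istar; apply: eq_card => i; rewrite !inE ltNge.
    by rewrite -e1 cardsC card_ord.
  exists (Ordinal cA); split => /=.
    apply/eqP; rewrite -(eqn_add2r #|A|) subnK; last by rewrite -ltnS.
    by rewrite addnC cI.
  case: (posnP #|A|) => hA.
    by rewrite /pbar hA eqxx.
  by apply: lt_le_trans Fs (key _ _ _ G1 _ (leqnn _)); rewrite hA -ltnS.
- apply: le_trans good _; apply: Prob_mono => // s Fs /= G0 k G1 kI pa hS.
  have := key s G0 k G1 kI (kth_count kI hS); lra.
Qed.
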